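(* There is some $d_0$ such that the following holds for every $d\geq d_0$ and every positive integer $t$. Let $G$ be a finite bipartite graph with average degree $d\geq t^4$ which contains no $C_4$-free subgraph with average degree at least $t$. Then there is a vertex $v\in V(G)$ and disjoint sets $A'\subseteq N(v)$ and $B'\subseteq V(G)\setminus\{v\}$ such that $d(G[A',B'])\geq d^{1/5}$.
   Context: $d(\cdot)$ denotes average degree, $d(F)=2e(F)/|V(F)|$. $N(v)$ is the neighbourhood of $v$ in $G$. For disjoint vertex sets $A',B'$, $G[A',B']$ is the bipartite subgraph of $G$ with vertex set $A'\cup B'$ consisting of all edges of $G$ between $A'$ and $B'$. A graph is $C_4$-free if it contains no $4$-cycle as a subgraph. *)

(* Defs.v *)
From Stdlib Require Import Reals.
From mathcomp Require Import all_boot.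
Set Implicit Arguments. Unset Strict Implicit. Unset Printing Implicit Defensive.

Definition simple_graph (T : finType) (e : rel T) : Prop :=
  (forall x y, e x y -> e y x) /\ (forall x, ~~ e x x).

Definition bipartite (T : finType) (e : rel T) : Prop :=
  exists X : {set T}, forall x y, e x y -> (x \in X) != (y \in X).

Definition subgraph_of (T : finType) (e : rel T) (S : {set T}) (f : rel T) : Prop :=
  (forall x y, f x y -> f y x) /\
  (forall x y, f x y -> [&& x \in S, y \in S & e x y]).

Definition edge_set (T : finType) (S : {set T}) (f : rel T) : {set {set T}} :=
  [set E : {set T} | [exists x in S, exists y in S,
     [&& x != y, f x y & E == [set x; y]]]].

Definition avg_deg (T : finType) (S : {set T}) (f : rel T) : R :=
  if S == set0 then R0
  else Rdiv (Rmult 2 (INR #|edge_set S f|)) (INR #|S|).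

Definition C4_free (T : finType) (f : rel T) : Prop :=
  ~ exists a b c d : T,
      [/\ uniq [:: a; b; c; d], f a b, f b c, f c d & f d a].

Definition nbhd (T : finType) (e : rel T) (v : T) : {set T} := [set u | e v u].

Definition bip_rel (T : finType) (e : rel T) (A B : {set T}) : rel T :=
  fun x y => e x y && (((x \in A) && (y \in B)) || ((x \in B) && (y \in A))).

(* Main.v *)
Require Import Defs.
From Stdlib Require Import Reals Lra Lia Classical Znat.
From mathcomp Require Import all_boot zify.
Set Implicit Arguments. Unset Strict Implicit. Unset Printing Implicit Defensive.

Lemma card_rows (T: finType) (A : {set T*T}) :
  #|A| = \sum_x #|[set y | (x,y) \in A]|.
Proof.
have -> : \sum_x #|[set y | (x,y) \in A]| = \sum_x \sum_y ((x,y) \in A : nat).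
  apply: eq_bigr => x _; rewrite -(sum1dep_card (fun y => (x,y) \in A)) big_mkcond /=.
  by apply: eq_bigr => y _; case: ((x,y) \in A).
rewrite (pair_big xpredT xpredT (fun x y => ((x,y) \in A : nat))) /=.
rewrite -sum1_card big_mkcond /=.
by apply: eq_bigr => -[x y] _; case: ((x,y) \in A).
Qed.

Lemma card_cols (T: finType) (A : {set T*T}) :
  #|A| = \sum_y #|[set x | (x,y) \in A]|.
Proof.
have -> : \sum_y #|[set x | (x,y) \in A]| = \sum_y \sum_x ((x,y) \in A : nat).
  apply: eq_bigr => y _; rewrite -(sum1dep_card (fun x => (x,y) \in A)) big_mkcond /=.
  by apply: eq_bigr => x _; case: ((x,y) \in A).
rewrite exchange_big.
rewrite (pair_big xpredT xpredT (fun x y => ((x,y) \in A : nat))) /=.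
rewrite -sum1_card big_mkcond /=.
by apply: eq_bigr => -[x y] _; case: ((x,y) \in A).
Qed.

Lemma card_bigcup_le (I T : finType) (P : pred I) (F : I -> {set T}) :
  #|\bigcup_(i | P i) F i| <= \sum_(i | P i) #|F i|.
Proof.
elim/big_rec2: _ => [|i n S Pi IH]; first by rewrite cards0.
apply: leq_trans (leq_card_setU _ _) _. by rewrite leq_add2l.
Qed.

Section Graph.
Variables (T : finType) (e : rel T) (X : {set T}).
Hypothesis esym : forall x y, e x y -> e y x.
Hypothesis eside : forall x y, e x y -> (x \in X) != (y \in X).

Definition symR (F : {set T*T}) : rel T := fun u v => ((u,v) \in F) || ((v,u) \in F).
Definition row (F : {set T*T}) x := [set y | (x,y) \in F].
Definition col (F : {set T*T}) y := [set x | (x,y) \in F].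

Lemma card_le_edge_set (Q : {set T*T}) (S : {set T}) (f : rel T) :
  (forall p, p \in Q -> [&& p.1 \in X, p.2 \notin X, p.1 \in S, p.2 \in S & f p.1 p.2]) ->
  #|Q| <= #|edge_set S f|.
Proof.
move=> hQ.
rewrite -(@card_in_imset _ _ (fun p : T*T => [set p.1; p.2]) Q).
  apply: subset_leq_card; apply/subsetP => E /imsetP [[x y] /hQ /and5P [hx hy xS yS fxy] ->].
  rewrite inE; apply/existsP; exists x; rewrite xS; apply/existsP; exists y.
  rewrite yS fxy /= eqxx !andbT.
  by apply/eqP => Exy; move: hy; rewrite -Exy hx.
move=> [x y] [x' y'] /hQ /and5P[hx hy _ _ _] /hQ /and5P[hx' hy' _ _ _] /= E.
have : x \in [set x'; y'] by rewrite -E !inE eqxx.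
rewrite !inE => /orP [/eqP ex | /eqP ey]; last by rewrite -ey hx in hy'.
have : y \in [set x'; y'] by rewrite -E !inE eqxx orbT.
rewrite !inE => /orP [/eqP ex2 | /eqP ey2]; first by rewrite ex2 hx' in hy.
by rewrite ex ey2.
Qed.

Definition P0 (W : {set T}) :=
  [set p : T*T | [&& p.1 \in X, p.1 \in W, p.2 \in W & e p.1 p.2]].

Lemma edge_set_le_P0 : #|edge_set [set: T] e| <= #|P0 [set: T]|.
Proof.
apply: leq_trans (leq_imset_card (fun p : T*T => [set p.1; p.2]) (P0 setT)).
apply: subset_leq_card; apply/subsetP => E.
rewrite inE => /existsP [x /andP [_ /existsP [y /andP [_ /and3P [nxy exy /eqP ->]]]]].
case hx: (x \in X).
  by apply/imsetP; exists (x,y) => //; rewrite inE /= hx !inE exy.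
apply/imsetP; exists (y,x); last by rewrite /= setUC.
have hy : y \in X by move: (eside exy); rewrite hx; case: (y \in X).
by rewrite inE /= hy !inE esym.
Qed.

Lemma P0_step (W : {set T}) (w : T) : w \in W -> #|P0 W| <= #|P0 (W :\ w)| + #|nbhd e w :&: W|.
Proof.
move=> wW.
pose Inv := if w \in X then [set (w, y) | y in nbhd e w :&: W]
            else [set (x, w) | x in nbhd e w :&: W].
have hI : #|Inv| <= #|nbhd e w :&: W|.
  by rewrite /Inv; case: (w \in X); apply: leq_imset_card.
apply: leq_trans (leq_add (leqnn _) hI).
apply: leq_trans (leq_card_setU _ _).
apply: subset_leq_card; apply/subsetP => -[x y].
rewrite !inE /= => /and4P [hx xW yW exy].
case: (eqVneq x w) => [exw | nxw].
  subst x; apply/orP; right; rewrite /Inv hx.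
  by apply/imsetP; exists y => //; rewrite !inE exy yW.
case: (eqVneq y w) => [eyw | nyw].
  subst y; apply/orP; right.
  have hw : (w \in X) = false by move: (eside exy); rewrite hx; case: (w \in X).
  rewrite /Inv hw; apply/imsetP; exists x => //; by rewrite !inE esym.
by apply/orP; left; rewrite hx xW yW exy.
Qed.

Lemma P0_set0 : P0 set0 = set0.
Proof. by apply/setP => p; rewrite !inE /= andbF. Qed.

Lemma mindeg (δ : nat) : 0 < δ -> 0 < #|[set: T]| ->
  δ * #|[set: T]| <= #|P0 [set: T]| ->
  exists W : {set T}, W != set0 /\ forall w, w \in W -> δ <= #|nbhd e w :&: W|.
Proof.
move=> dpos npos h.
have hT : ([set: T] != set0) && (δ * #|[set: T]| <= #|P0 [set: T]|).
  by rewrite h andbT -card_gt0.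
case: (@arg_minnP _ setT (fun W : {set T} => (W != set0) && (δ * #|W| <= #|P0 W|)) (fun W : {set T} => #|W|) hT) => W /andP [Wn hW] Wmin.
exists W; split => // w wW.
rewrite leqNgt; apply/negP => hlt.
have step := P0_step wW.
have cardW : #|W| = (#|W :\ w|).+1 by rewrite (cardsD1 w W) wW.
rewrite cardW in hW.
have h2 : δ * #|W :\ w| < #|P0 (W :\ w)| by nia.
have Wn' : W :\ w != set0.
  apply/eqP => E; move: h2; by rewrite E P0_set0 !cards0 muln0.
have := Wmin (W :\ w); rewrite Wn' (ltnW h2) => /(_ isT).
by rewrite cardW ltnn.
Qed.

Definition pxy (x y u v : T) := ((u,v) == (x,y)) || ((v,u) == (x,y)).

Lemma symR_U1 F x y u v : symR ((x,y) |: F) u v = pxy x y u v || symR F u v.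
Proof.
rewrite /symR /pxy !inE.
by case: ((u,v) == (x,y)); case: ((v,u) == (x,y)); case: ((u,v) \in F); case: ((v,u) \in F).
Qed.

Lemma pxy_mem x y a b u v : pxy x y a b -> pxy x y u v ->
  ((u == a) || (u == b)) && ((v == a) || (v == b)).
Proof.
rewrite /pxy !xpair_eqE.
by case/orP => /andP [/eqP -> /eqP ->]; case/orP => /andP [/eqP -> /eqP ->]; rewrite !eqxx ?orbT.
Qed.

Lemma symRC F u v : symR F u v = symR F v u.
Proof. by rewrite /symR orbC. Qed.

Definition c4b (F : {set T*T}) :=
  [forall a, [forall b, [forall c, [forall d,
    ~~ [&& uniq [:: a; b; c; d], symR F a b, symR F b c, symR F c d & symR F d a]]]]].

Lemma uniq4 (a b c d : T) : uniq [:: a; b; c; d] ->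
  (a != b) /\ (a != c) /\ (a != d) /\ (b != c) /\ (b != d) /\ (c != d).
Proof.
rewrite /= !inE !negb_or.
by case/and4P => /and3P [? ? ?] /andP [? ?] ? _; repeat split.
Qed.

Lemma core F x y a b c d : uniq [:: a; b; c; d] -> pxy x y a b ->
  symR ((x,y) |: F) b c -> symR ((x,y) |: F) c d -> symR ((x,y) |: F) d a ->
  exists y' w, [&& symR F x y', symR F y' w, symR F w y & y != y'].
Proof.
move=> hu hab; rewrite !symR_U1.
have [nab [nac [nad [nbc [nbd ncd]]]]] := uniq4 hu.
have nca : (c == a) = false by rewrite eq_sym (negbTE nac).
have ncb : (c == b) = false by rewrite eq_sym (negbTE nbc).
have nda : (d == a) = false by rewrite eq_sym (negbTE nad).
have ndb : (d == b) = false by rewrite eq_sym (negbTE nbd).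
case/orP => [/(pxy_mem hab) /andP [_]|hbc]; first by rewrite nca ncb.
case/orP => [/(pxy_mem hab) /andP []|hcd]; first by rewrite nca ncb.
case/orP => [/(pxy_mem hab) /andP []|hda]; first by rewrite nda ndb.
move: hab; rewrite /pxy !xpair_eqE => /orP [/andP [/eqP ea /eqP eb] | /andP [/eqP eb /eqP ea]]; subst.
  exists d, c; by rewrite symRC hda symRC hcd symRC hbc.
exists c, d; by rewrite hbc hcd hda /= eq_sym nca.
Qed.

Lemma c4_new F x y : c4b F -> ~~ c4b ((x,y) |: F) ->
  exists y' w, [&& symR F x y', symR F y' w, symR F w y & y != y'].
Proof.
move=> hF /forallPn [a /forallPn [b /forallPn [c /forallPn [d /negPn /and5P [hu h1 h2 h3 h4]]]]].
move: (h1) (h2) (h3) (h4); rewrite !symR_U1.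
case/orP => [p1 _ _ _|f1]; first exact: core hu p1 h2 h3 h4.
case/orP => [p2 _ _|f2].
  have hu' : uniq [:: b; c; d; a] by rewrite -(rot_uniq 1) in hu.
  exact: core hu' p2 h3 h4 h1.
case/orP => [p3 _|f3].
  have hu' : uniq [:: c; d; a; b] by rewrite -(rot_uniq 2) in hu.
  exact: core hu' p3 h4 h1 h2.
case/orP => [p4|f4].
  have hu' : uniq [:: d; a; b; c] by rewrite -(rot_uniq 3) in hu.
  exact: core hu' p4 h1 h2 h3.
move/forallP: hF => /(_ a) /forallP /(_ b) /forallP /(_ c) /forallP /(_ d).
by rewrite hu f1 f2 f3 f4.
Qed.

Section Count.
Variables (W : {set T}) (δ D κ : nat).
Hypothesis Wdeg : forall w, w \in W -> δ <= #|nbhd e w :&: W|.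
Hypothesis hk : forall v (A B : {set T}), A \subset nbhd e v -> B \subset [set~ v] ->
  [disjoint A & B] -> 2 * #|edge_set (A :|: B) (bip_rel e A B)| <= κ * #|A :|: B|.

Definition Pt x := [set y in take δ (enum (nbhd e x :&: W))].

Lemma Pt_sub x : Pt x \subset nbhd e x :&: W.
Proof. by apply/subsetP => y; rewrite inE => /mem_take; rewrite mem_enum. Qed.

Lemma Pt_card x : x \in W -> #|Pt x| = δ.
Proof.
move=> xW; rewrite cardsE.
have /card_uniqP -> : uniq (take δ (enum (nbhd e x :&: W))) by apply: take_uniq; exact: enum_uniq.
rewrite size_take -cardE.
have := Wdeg xW; case: ltnP => // h1 h2; apply/eqP; by rewrite eqn_leq h1 h2.
Qed.

Definition Ep := [set p : T*T | (p.1 \in X :&: W) && (p.2 \in Pt p.1)].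

Lemma Ep_prop p : p \in Ep -> [&& p.1 \in X, p.2 \notin X, p.1 \in W, p.2 \in W & e p.1 p.2].
Proof.
rewrite inE => /andP [hx /(subsetP (Pt_sub _))].
rewrite !inE in hx *; case/andP: hx => h1 h2; case/andP => h3 h4.
have h5 : p.2 \notin X by move: (eside h3); rewrite h1; case: (p.2 \in X).
by rewrite h1 h5 h2 h4 h3.
Qed.

Lemma card_row_Ep x : #|row Ep x| = (x \in X :&: W) * δ.
Proof.
case: (boolP (x \in X :&: W)) => h.
  have -> : row Ep x = Pt x.
    by apply/setP => y; rewrite /row /Ep in_set in_set /= h.
  by rewrite Pt_card ?mul1n //; rewrite inE in h; case/andP: h.
have -> : row Ep x = set0.
  by apply/setP => y; rewrite /row /Ep in_set in_set /= (negbTE h) in_set0.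
by rewrite cards0.
Qed.

Lemma card_Ep : #|Ep| = #|X :&: W| * δ.
Proof.
rewrite card_rows; under eq_bigr do rewrite card_row_Ep.
rewrite -sum_nat_const [RHS]big_mkcond /=.
by apply: eq_bigr => x _; case: (x \in X :&: W); rewrite ?mul1n ?mul0n.
Qed.

Definition good (F : {set T*T}) := [&& F \subset Ep, [forall x, #|row F x| <= D] & c4b F].

Lemma good0 : good set0.
Proof.
rewrite /good sub0set /=; apply/andP; split.
  by apply/forallP => x; rewrite /row (_ : [set y | (x,y) \in set0] = set0) ?cards0 //;
     apply/setP => y; rewrite !inE.
apply/forallP => a; apply/forallP => b; apply/forallP => c; apply/forallP => d.
by rewrite /symR !inE !andbF.
Qed.


Lemma F_sides (F : {set T*T}) : F \subset Ep -> forall u v, (u,v) \in F -> (u \in X) && (v \notin X).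
Proof. by move=> FE u v /(subsetP FE) /Ep_prop /and5P [-> -> _ _ _]. Qed.

Lemma count_main (t : nat) : 0 < t -> 0 < κ -> D = 4 * t -> 14 * t * t * κ <= δ ->
  #|W| <= 2 * #|X :&: W| ->
  exists F : {set T*T}, [/\ F \subset Ep, c4b F & t * #|W| <= 2 * #|F|].
Proof.
move=> tpos kpos hD hδ hW.
case: (@arg_maxnP _ set0 good (fun F => #|F|) good0) => F gF Fmax.
case/and3P: gF => FE /forallP Frow Fc4.
exists F; split => //.
have sides := F_sides FE.
pose Sat := [set x | D <= #|row F x|].
pose SP := [set p in Ep | p.1 \in Sat].
pose NS := [set p in Ep :\: F | p.1 \notin Sat].
have Ecov : #|Ep| <= #|F| + #|SP| + #|NS|.
  apply: (@leq_trans #|F :|: SP :|: NS|).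
    apply: subset_leq_card; apply/subsetP => p pE.
    case: (boolP (p \in F)) => pF; first by rewrite !in_setU pF.
    apply/setUP; case: (boolP (p.1 \in Sat)) => ps; [left; apply/setUP; right | right].
      by rewrite /SP in_set pE ps.
    by rewrite /NS in_set in_setD pE pF ps.
  apply: leq_trans (leq_card_setU _ _) _; rewrite leq_add2r.
  exact: leq_card_setU.
have hSP : #|SP| <= #|Sat| * δ.
  rewrite card_rows -sum_nat_const [X in _ <= X]big_mkcond /=; apply: leq_sum => x _.
  case: ifP => hx.
    apply: (@leq_trans #|row Ep x|); last by rewrite card_row_Ep; case: (x \in X :&: W); rewrite ?mul1n ?mul0n.
    apply: subset_leq_card; apply/subsetP => y; rewrite !inE /=; by case/andP.
  rewrite leqn0 cards_eq0; apply/eqP/setP => y; by rewrite in_set0 /row in_set /SP in_set /= hx andbF.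
have hSat : #|Sat| * D <= #|F|.
  rewrite (card_rows F) -sum_nat_const [X in X <= _]big_mkcond /=; apply: leq_sum => x _.
  by case: ifP => hx //; rewrite inE in hx.
pose A (y : T) := col F y.
pose B (y : T) := [set z | [exists w, ((w,y) \in F) && ((w,z) \in F)]] :\ y.
pose Q (y : T) := [set p : T*T | [&& p.1 \in A y, p.2 \in B y & e p.1 p.2]].
have hQ : forall y, 2 * #|Q y| <= κ * (1 + D) * #|col F y|.
  move=> y.
  have AX : forall z, z \in A y -> z \in X.
    by move=> z; rewrite inE => /sides /andP [].
  have BX : forall z, z \in B y -> z \notin X.
    by move=> z; rewrite !inE => /andP [_ /existsP [w /andP [_ /sides /andP []]]].
  have h1 : #|Q y| <= #|edge_set (A y :|: B y) (bip_rel e (A y) (B y))|.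
    apply: card_le_edge_set => p; rewrite in_set => /and3P [pA pB ep].
    by rewrite AX // BX // !in_setU pA pB orbT /bip_rel ep pA pB.
  have h2 := hk (v:=y) (A:=A y) (B:=B y).
  have hB : #|B y| <= #|A y| * D.
    apply: (@leq_trans #|\bigcup_(w in A y) row F w|).
      apply: subset_leq_card; apply/subsetP => z; rewrite !inE => /andP [_ /existsP [w /andP [h3 h4]]].
      by apply/bigcupP; exists w; rewrite !inE.
    apply: leq_trans (card_bigcup_le _ _) _.
    rewrite -sum_nat_const; apply: leq_sum => w _; exact: Frow.
  have h3 : 2 * #|edge_set (A y :|: B y) (bip_rel e (A y) (B y))| <= κ * #|A y :|: B y|.
    apply: h2.
    - apply/subsetP => z; rewrite !inE => /(subsetP FE) /Ep_prop /and5P [_ _ _ _ /esym]; by [].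
    - by apply/subsetP => z; rewrite !inE => /andP [].
    - rewrite disjoints_subset; apply/subsetP => z /AX h; rewrite in_setC; apply/negP => /BX; by rewrite h.
  apply: (leq_trans (leq_mul (leqnn 2) h1)); apply: (leq_trans h3).
  rewrite -mulnA leq_mul2l; apply/orP; right.
  apply: leq_trans (leq_card_setU _ _) _.
  rewrite mulnDl mul1n; apply: leq_add; first exact: leqnn. rewrite mulnC; exact: hB.
have hNS : 2 * #|NS| <= κ * (1 + D) * #|F|.
  apply: (@leq_trans (2 * \sum_y #|Q y|)).
    rewrite leq_mul2l; apply/orP; right.
    apply: (@leq_trans #|\bigcup_(y | true) Q y|); last exact: card_bigcup_le.
    apply: subset_leq_card; apply/subsetP => -[x y].
    rewrite /NS in_set in_setD /= => /andP [/andP [nF pE] nSat].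
    have hxy := Ep_prop pE; case/and5P: hxy => hx hy _ _ exy.
    have ng : ~~ good ((x,y) |: F).
      apply/negP => g; have := Fmax _ g; rewrite cardsU1 nF /= ltnn; by [].
    have nc4 : ~~ c4b ((x,y) |: F).
      apply: contra ng => c4; rewrite /good c4 andbT; apply/andP; split.
        by rewrite subUset sub1set FE andbT.
      apply/forallP => x'; case: (eqVneq x' x) => [->|nx].
        apply: (@leq_trans #|y |: row F x|).
          apply: subset_leq_card; apply/subsetP => z; rewrite !inE xpair_eqE eqxx /=.
          by case/orP => [->|->]; rewrite ?orbT.
        rewrite cardsU1; move: nSat; rewrite inE -ltnNge.
        move=> h; case: (y \in row F x) => /=; lia.
      rewrite (_ : row ((x,y) |: F) x' = row F x') //.
      by apply/setP => z; rewrite !inE xpair_eqE (negbTE nx).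
    have [y' [w /and4P [s1 s2 s3 ny]]] := c4_new Fc4 nc4.
    have hxy' : (x, y') \in F.
      move: s1; rewrite /symR; case/orP => // /sides /andP [_]; by rewrite hx.
    have hy' : y' \notin X by case/andP: (sides _ _ hxy').
    have hwy' : (w, y') \in F.
      move: s2; rewrite /symR; case/orP => // /sides /andP [h _]; by rewrite h in hy'.
    have hwy : (w, y) \in F.
      move: s3; rewrite /symR; case/orP => // /sides /andP [h _]; by rewrite h in hy.
    apply/bigcupP; exists y' => //.
    rewrite !inE /= hxy' ny exy andbT /=.
    by apply/existsP; exists w; rewrite hwy' hwy.
  rewrite big_distrr /= (card_cols F) big_distrr /=.
  by apply: leq_sum => y _; exact: hQ.
have cE := card_Ep.
set a := #|X :&: W| in cE hW *.
set f := #|F| in hSat hNS Ecov *.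
set sp := #|SP| in hSP Ecov *.
set ns := #|NS| in hNS Ecov *.
set s := #|Sat| in hSP hSat.
rewrite cE in Ecov.
have e1 : 2 * D * (a * δ) <= 2 * D * f + 2 * D * sp + 2 * D * ns.
  by rewrite -!mulnDr leq_mul2l Ecov orbT.
have e2 : 2 * D * sp <= 2 * δ * f.
  have := leq_mul (leqnn D) hSP; have := leq_mul (leqnn δ) hSat; nia.
have e3 : 2 * D * ns <= D * (κ * (1 + D) * f).
  have := leq_mul (leqnn D) hNS; nia.
have e4 : 2 * D + D * (κ * (1 + D)) <= 2 * δ.
  rewrite hD; nia.
have e5 : D * δ * a <= 2 * δ * f by nia.
have dpos : 0 < δ by nia.
have e6 : D * a <= 2 * f.
  have : δ * (D * a) <= δ * (2 * f) by nia.
  by rewrite leq_mul2l gtn_eqF.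
rewrite hD in e6.
nia.
Qed.

Lemma count_final (t : nat) : (0 < t)%N -> (0 < κ)%N -> D = 4 * t -> 14 * t * t * κ <= δ ->
  #|W| <= 2 * #|X :&: W| -> W != set0 ->
  exists (S : {set T}) (f : rel T),
    subgraph_of e S f /\ C4_free f /\ Rle (INR t) (avg_deg S f).
Proof.
move=> tpos kpos hD hδ hW Wn.
have [F [FE c4 ht]] := count_main tpos kpos hD hδ hW.
exists W, (symR F); split; [split|split].
- by move=> x y; rewrite symRC.
- move=> x y; rewrite /symR => /orP [] /(subsetP FE) /Ep_prop /and5P [_ _ h1 h2 h3] /=.
    by rewrite h1 h2 h3.
  by rewrite h1 h2 (esym h3).
- move=> [a [b [c [d [hu h1 h2 h3 h4]]]]].
  move/forallP: c4 => /(_ a) /forallP /(_ b) /forallP /(_ c) /forallP /(_ d).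
  by rewrite hu h1 h2 h3 h4.
- have hES : #|F| <= #|edge_set W (symR F)|.
    apply: card_le_edge_set => -[u v] uvF.
    have := Ep_prop (subsetP FE _ uvF); case/and5P => -> -> -> -> _.
    by rewrite /symR uvF.
  rewrite /avg_deg (negbTE Wn).
  have Wpos : Rlt 0 (INR #|W|) by apply: lt_0_INR; apply/ltP; rewrite card_gt0.
  have hnat : Rle (Rmult (INR t) (INR #|W|)) (Rmult 2 (INR #|edge_set W (symR F)|)).
    rewrite -mult_INR (_ : IZR 2 = INR 2) // -mult_INR; apply: le_INR; apply/leP.
    by apply: leq_trans ht _; rewrite leq_mul2l hES orbT.
  apply: (Rmult_le_reg_r (INR #|W|)) => //.
  rewrite /Rdiv Rmult_assoc Rinv_l ?Rmult_1_r //; lra.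
Qed.

End Count.

End Graph.

Section Reals.
Local Open Scope R_scope.

Lemma rpow_facts d : 101 ^ 5 <= d ->
  0 < Rpower d (1/5) /\ Rpower d (1/5) ^ 5 = d /\ 100 <= Rpower d (1/5).
Proof.
move=> hd.
have dpos : 0 < d by lra.
have kpos : 0 < Rpower d (1/5) by rewrite /Rpower; apply: exp_pos.
have k5 : Rpower d (1/5) ^ 5 = d.
  rewrite -Rpower_pow // Rpower_mult (INR_IZR_INZ 5) /=.
  rewrite (_ : 1 / 5 * 5 = 1); last by field.
  exact: Rpower_1.
split => //; split => //.
destruct (Rle_or_lt 100 (Rpower d (1/5))) as [h|h] => //.
have : Rpower d (1/5) ^ 5 <= 100 ^ 5 by apply: pow_incr; lra.
rewrite k5 => h2.
have : 100 ^ 5 < 101 ^ 5 by simpl; lra.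
lra.
Qed.

Lemma real_bound k tR kR dR : 100 <= k -> 1 <= tR -> tR ^ 4 <= k ^ 5 -> kR <= k + 1 ->
  k ^ 5 < 2 * (dR + 1) -> 14 * tR * tR * kR < dR.
Proof.
move=> hk ht ht4 hkR hd.
set u := tR * tR.
have u0 : 0 <= u by rewrite /u; nra.
have uu : u * u <= k ^ 5 by rewrite /u; rewrite (_ : tR * tR * (tR * tR) = tR ^ 4); [lra | ring].
have k3 : 12544 <= k ^ 3 by simpl; nra.
have k2 : 0 <= k * k by nra.
have a1 : (28 * u * k) * (28 * u * k) <= 784 * k ^ 7.
  have : u * u * (k * k) <= k ^ 5 * (k * k) by apply: Rmult_le_compat_r.
  rewrite (_ : k ^ 7 = k ^ 5 * (k * k)); last by ring.
  nra.
have a2 : 784 * k ^ 7 <= (k ^ 5 / 4) * (k ^ 5 / 4).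
  have k7 : 0 <= k ^ 7 by apply: pow_le; lra.
  rewrite (_ : k ^ 5 / 4 * (k ^ 5 / 4) = k ^ 7 * k ^ 3 / 16); last by field.
  nra.
have a3 : 28 * u * k <= k ^ 5 / 4.
  destruct (Rle_or_lt (28 * u * k) (k ^ 5 / 4)) as [h|h] => //.
  have k5 : 0 <= k ^ 5 / 4 by have := pow_le k 5; lra.
  nra.
have k5b : 4 <= k ^ 5.
  have : 100 ^ 5 <= k ^ 5 by apply: pow_incr; lra.
  simpl; lra.
have : 14 * tR * tR * kR <= 14 * u * (k + 1) by rewrite /u; nra.
have : 14 * u * (k + 1) <= 28 * u * k by nra.
lra.
Qed.

Lemma real_avg (ES B0 δ n : nat) (k : R) : (0 < n)%N -> (ES <= B0)%N -> (B0 < δ.+1 * n)%N ->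
  k ^ 5 = 2 * INR ES / INR n -> k ^ 5 < 2 * (INR δ + 1).
Proof.
move=> /ltP npos /leP h1 /ltP h2 hk.
have n0 : 0 < INR n by apply: lt_0_INR.
have e1 : INR ES <= INR B0 by apply: le_INR.
have e2 : INR B0 < (INR δ + 1) * INR n.
  by rewrite -S_INR -mult_INR; apply: lt_INR.
rewrite hk; apply: (Rmult_lt_reg_r (INR n)) => //.
rewrite /Rdiv Rmult_assoc Rinv_l; lra.
Qed.

Lemma real_kappa (k : R) : 0 < k -> exists κ : nat, k <= INR κ /\ INR κ <= k + 1.
Proof.
move=> kpos; have [h1 h2] := archimed k.
have z0 : (0 <= up k)%Z by apply: le_IZR; simpl; lra.
exists (Z.to_nat (up k)); rewrite INR_IZR_INZ Z2Nat.id //; lra.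
Qed.

Lemma real_contra (ES S κ : nat) (k : R) : (0 < S)%N -> 2 * INR ES / INR S < k -> k <= INR κ ->
  (2 * ES <= κ * S)%N.
Proof.
move=> /ltP Spos h1 h2.
have n0 : 0 < INR S by apply: lt_0_INR.
have : 2 * INR ES < INR κ * INR S.
  have e : 2 * INR ES = (2 * INR ES / INR S) * INR S by field; lra.
  rewrite e; apply: Rlt_le_trans (Rmult_lt_compat_r _ _ _ n0 h1) _.
  apply: Rmult_le_compat_r; lra.
rewrite (_ : 2 = INR 2) // -!mult_INR => /INR_lt /ltP h.
exact: ltnW.
Qed.

Lemma real_final (t κ δ : nat) (k : R) : 100 <= k -> (0 < t)%N -> INR t ^ 4 <= k ^ 5 ->
  k <= INR κ -> INR κ <= k + 1 -> k ^ 5 < 2 * (INR δ + 1) ->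
  (0 < κ)%N /\ (14 * t * t * κ <= δ)%N.
Proof.
move=> hk /leP tpos ht hk1 hk2 hd.
split.
  apply/ltP; apply: INR_lt; simpl; lra.
have t1 : 1 <= INR t by apply: (le_INR 1).
have := @real_bound k (INR t) (INR κ) (INR δ) hk t1 ht hk2 hd.
rewrite (_ : 14 = INR 14); last by simpl; ring.
rewrite -!mult_INR => /INR_lt /ltP h; exact: ltnW.
Qed.
End Reals.

Theorem corollary7 :
  exists d0 : R, forall d : R, Rle d0 d -> forall t : nat, (0 < t)%N ->
  forall (T : finType) (e : rel T),
    simple_graph e -> bipartite e ->
    avg_deg [set: T] e = d ->
    Rle (pow (INR t) 4) d ->
    (~ exists (S : {set T}) (f : rel T),
         subgraph_of e S f /\ C4_free f /\ Rle (INR t) (avg_deg S f)) ->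
    exists (v : T) (A' B' : {set T}),
      [/\ A' \subset nbhd e v, B' \subset [set~ v], [disjoint A' & B'] &
          Rle (Rpower d (Rdiv 1 5)) (avg_deg (A' :|: B') (bip_rel e A' B'))].
Proof.
exists (pow 101 5).
move=> d hd t tpos T e hs hb havg ht4 hno.
apply: NNPP => H; apply: hno.
have [kpos [k5 k100]] := rpow_facts hd.
set k := Rpower d (Rdiv 1 5) in kpos k5 k100 H.
case: hs => esym eirr; case: hb => X hX.
have [κ [hκ1 hκ2]] := real_kappa kpos.
have hk : forall v (A B : {set T}), A \subset nbhd e v -> B \subset [set~ v] ->
    [disjoint A & B] -> 2 * #|edge_set (A :|: B) (bip_rel e A B)| <= κ * #|A :|: B|.
  move=> v A B h1 h2 h3.
  case: (boolP (A :|: B == set0)) => hS.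
    rewrite (eqP hS) cards0 muln0 leqn0 muln_eq0 /=; apply/eqP.
    apply/eqP; rewrite cards_eq0; apply/eqP/setP => E'.
    rewrite in_set0 inE; apply/negbTE/existsP => -[x]; by rewrite ?in_set0.
  have hlt : Rlt (avg_deg (A :|: B) (bip_rel e A B)) k.
    by apply: Rnot_le_lt => hle; apply: H; exists v, A, B; split.
  move: hlt; rewrite /avg_deg (negbTE hS) => hlt.
  apply: real_contra hlt hκ1; by rewrite card_gt0.
have npos : 0 < #|[set: T]|.
  rewrite card_gt0; apply/negP => /eqP E0.
  move: havg; rewrite /avg_deg E0 eqxx => hd0.
  rewrite -hd0 in hd; simpl in hd; lra.
have hES := edge_set_le_P0 esym hX.
set n := #|[set: T]| in npos havg.
set B0 := #|P0 e X [set: T]| in hES.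
set δ := B0 %/ n.
have hδ1 : δ * n <= B0 := leq_trunc_div B0 n.
have hδ2 : B0 < δ.+1 * n := ltn_ceil B0 npos.
have dlt : Rlt (k ^ 5) (2 * (INR δ + 1)).
  apply: (real_avg npos hES hδ2).
  rewrite k5 -havg /avg_deg ifF //; apply/negbTE; by rewrite -card_gt0.
have [kappa_pos hδ] := real_final k100 tpos (eq_ind_r (fun z => Rle _ z) ht4 k5) hκ1 hκ2 dlt.
have dpos : 0 < δ by nia.
have [W [Wn Wdeg]] := mindeg esym hX dpos npos hδ1.
case: (leqP #|W| (2 * #|X :&: W|)) => hW.
  exact: (count_final esym hX Wdeg hk tpos kappa_pos (erefl _) hδ hW Wn).
have hX' : forall x y, e x y -> (x \in ~: X) != (y \in ~: X).
  by move=> x y h; rewrite !inE; move: (hX x y h); case: (x \in X); case: (y \in X).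
have hW' : #|W| <= 2 * #|~: X :&: W|.
  have := cardsID X W; rewrite setIC (setIC (~: X)) -setDE; lia.
exact: (count_final esym hX' Wdeg hk tpos kappa_pos (erefl _) hδ hW' Wn).
Qed.
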